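(* Let $K$ be a spherically complete valued field, $d\ge1$, and $C\subseteq K^d$ an $\mathcal{O}$-submodule. Then there exist a complete flag of $K$-linear subspaces $\{0\}\subsetneq F_1\subsetneq F_2\subsetneq\dots\subsetneq F_d=K^d$ (so $\dim F_i=i$) and nonempty upwards closed subsets $\Delta_1\supseteq\Delta_2\supseteq\dots\supseteq\Delta_d$ of $\Gamma\cup\{\infty\}$ such that $$C=\{v_1+\dots+v_d:\ v_i\in F_i,\ \nu_{K^d}(v_i)\in\Delta_i \text{ for all } i\}.$$
   Context: $K$ is a field with valuation $\nu:K\to\Gamma\cup\{\infty\}$ ($\Gamma$ an ordered abelian group, $\infty$ above all of $\Gamma$), valuation ring $\mathcal{O}=\{x:\nu(x)\ge0\}$. On $K^d$, $\nu_{K^d}(x_1,\dots,x_d)=\min_i\nu(x_i)$. A ball in $K$ is $\{x:\nu(x-c)\ge r\}$ or $\{x:\nu(x-c)>r\}$ ($c\in K$, $r\in\Gamma$); $K$ is spherically complete if every nested (totally ordered by inclusion) family of balls has nonempty intersection. A subset $\Delta\subseteq\Gamma\cup\{\infty\}$ is upwards closed if $\gamma\in\Delta$, $\delta\ge\gamma$ imply $\delta\in\Delta$. *)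

(* Defs.v *)
From HB Require Import structures.
From mathcomp Require Import all_boot all_order all_algebra.
Set Implicit Arguments. Unset Strict Implicit. Unset Printing Implicit Defensive.
Import GRing.Theory.
Local Open Scope ring_scope.

Section Valued.
Variable G : zmodType.
Variable leG : rel G.

Definition ordered_abelian_group : Prop :=
  [/\ (forall a, leG a a),
      (forall a b, leG a b -> leG b a -> a = b),
      (forall a b c, leG a b -> leG b c -> leG a c),
      (forall a b, leG a b || leG b a)
    & (forall a b c, leG a b -> leG (a + c) (b + c))].

(* Gamma u {oo} is represented by option G, with None = oo (above all of Gamma) *)
Definition leE (x y : option G) : bool :=
  match x, y with
  | _, None => true
  | None, Some _ => false
  | Some a, Some b => leG a b
  end.
Definition ltE (x y : option G) : bool := leE x y && ~~ leE y x.
Definition addE (x y : option G) : option G :=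
  match x, y with Some a, Some b => Some (a + b) | _, _ => None end.
Definition minE (x y : option G) : option G := if leE x y then x else y.

Variable K : fieldType.
Variable nu : K -> option G.

Definition is_valuation : Prop :=
  [/\ (forall x, nu x = None <-> x = 0),
      (forall x y, nu (x * y) = addE (nu x) (nu y))
    & (forall x y, leE (minE (nu x) (nu y)) (nu (x + y)))].

Definition in_O (a : K) : bool := leE (Some 0) (nu a).

Definition is_ball (B : K -> Prop) : Prop :=
  exists (c : K) (r : G),
    (forall x, B x <-> leE (Some r) (nu (x - c))) \/
    (forall x, B x <-> ltE (Some r) (nu (x - c))).

Definition spherically_complete : Prop :=
  forall S : (K -> Prop) -> Prop,
    (forall B, S B -> is_ball B) ->
    (forall B1 B2, S B1 -> S B2 ->
        (forall x, B1 x -> B2 x) \/ (forall x, B2 x -> B1 x)) ->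
    exists x, forall B, S B -> B x.

Definition nu_vec (d : nat) (v : 'rV[K]_d) : option G :=
  foldr minE None [seq nu (v ord0 i) | i <- enum 'I_d].

Definition is_O_submodule (d : nat) (C : 'rV[K]_d -> Prop) : Prop :=
  [/\ C 0,
      (forall x y, C x -> C y -> C (x + y))
    & (forall a x, in_O a -> C x -> C (a *: x))].

Definition upwards_closed (D : option G -> Prop) : Prop :=
  forall g h, D g -> leE g h -> D h.
End Valued.

(* Main.v *)
Require Import Defs.
From HB Require Import structures.
From mathcomp Require Import all_boot all_order all_algebra.
From Stdlib Require Import Classical.
From mathcomp Require Import ring.
Set Implicit Arguments. Unset Strict Implicit. Unset Printing Implicit Defensive.
Import GRing.Theory.
Local Open Scope ring_scope.

Section Basics.
Variables (K : fieldType) (G : zmodType) (leG : rel G).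
Hypothesis HG : ordered_abelian_group leG.
Variable nu : K -> option G.
Hypothesis Hnu : is_valuation leG nu.

Local Notation le := (leE leG).

Lemma leG_refl a : leG a a. Proof. by case: HG. Qed.
Lemma leG_anti a b : leG a b -> leG b a -> a = b. Proof. by case: HG => _ h _ _ _; apply: h. Qed.
Lemma leG_trans a b c : leG a b -> leG b c -> leG a c. Proof. by case: HG => _ _ h _ _; apply: h. Qed.
Lemma leG_total a b : leG a b || leG b a. Proof. by case: HG. Qed.
Lemma leG_add a b c : leG a b -> leG (a + c) (b + c). Proof. by case: HG => _ _ _ _ h; apply: h. Qed.

Lemma leE_refl x : le x x. Proof. by case: x => //= a; apply: leG_refl. Qed.
Lemma leE_trans x y z : le x y -> le y z -> le x z.
Proof. by case: x; case: y; case: z => //= a b c; apply: leG_trans. Qed.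
Lemma leE_total x y : le x y || le y x.
Proof. by case: x; case: y => //= a b; apply: leG_total. Qed.
Lemma leE_None x : le x None. Proof. by case: x. Qed.
Lemma leE_Nonel x : le None x -> x = None. Proof. by case: x. Qed.
Lemma leE_anti x y : le x y -> le y x -> x = y.
Proof. by case: x; case: y => //= a b h1 h2; rewrite (leG_anti h1 h2). Qed.
Lemma leE_min g x y : le g (minE leG x y) = le g x && le g y.
Proof.
rewrite /minE; case: ifP => h.
  by apply/idP/andP => [h1|[]//]; split=> //; apply: leE_trans h.
apply/idP/andP => [h1|[]//]; split=> //; apply: leE_trans h1 _.
by move: (leE_total x y); rewrite h.
Qed.
Lemma leE_nle x y : ~~ le x y -> le y x.
Proof. by move=> h; move: (leE_total x y); rewrite (negbTE h). Qed.

Lemma leE_addr x y : le (Some 0) y -> le x (addE x y).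
Proof.
case: x; case: y => //= t s h.
by move: (leG_add s h); rewrite add0r addrC.
Qed.

Lemma nu_eq0 x : nu x = None <-> x = 0. Proof. by case: Hnu. Qed.
Lemma nu0 : nu 0 = None. Proof. by apply/nu_eq0. Qed.
Lemma nuM x y : nu (x * y) = addE (nu x) (nu y). Proof. by case: Hnu. Qed.
Lemma nu_ultra g x y : le g (nu x) -> le g (nu y) -> le g (nu (x + y)).
Proof.
case: Hnu => _ _ h h1 h2; apply: (leE_trans _ (h x y)).
by rewrite leE_min h1 h2.
Qed.
Lemma nu_Some x : x != 0 -> exists s, nu x = Some s.
Proof.
move=> hx; case e: (nu x) => [s|]; first by exists s.
by move/nu_eq0: e => e; rewrite e eqxx in hx.
Qed.

Lemma nu1 : nu 1 = Some 0.
Proof.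
have [s hs] := nu_Some (oner_neq0 K).
have := nuM 1 1; rewrite mulr1 hs /= => -[] e.
by congr Some; apply: (@addrI _ s); rewrite addr0 -e.
Qed.

Lemma nuN1 : nu (-1) = Some 0.
Proof.
have n1 : (-1 : K) != 0 by rewrite oppr_eq0 oner_neq0.
have [s hs] := nu_Some n1.
have := nuM (-1) (-1); rewrite mulrNN mulr1 hs nu1 /= => -[] e.
congr Some.
case/orP: (leG_total s 0) => h.
- have := leG_add s h; rewrite -e add0r => h2; exact: leG_anti.
- have := leG_add s h; rewrite -e add0r => h2; exact: leG_anti.
Qed.

Lemma nuN x : nu (- x) = nu x.
Proof.
rewrite -mulN1r nuM nuN1; case: (nu x) => //= a; by rewrite add0r.
Qed.

Lemma nuB x y : nu (x - y) = nu (y - x).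
Proof. by rewrite -nuN opprB. Qed.

Lemma nuV x s : nu x = Some s -> nu x^-1 = Some (- s).
Proof.
move=> hs; have x0 : x != 0 by apply/eqP => e; rewrite e nu0 in hs.
have := nuM x x^-1; rewrite mulfV // nu1 hs.
case: (nu x^-1) => //= t [] e; congr Some.
by apply: (@addrI _ s); rewrite -e subrr.
Qed.

Lemma inO_div a b : b != 0 -> le (nu b) (nu a) -> in_O leG nu (a / b).
Proof.
move=> b0; have [s hs] := nu_Some b0; rewrite /in_O nuM (nuV hs) hs.
case: (nu a) => //= t h.
by move: (leG_add (- s) h); rewrite subrr.
Qed.

Lemma inO_le a x g : in_O leG nu a -> le g (nu x) -> le g (nu (a * x)).
Proof.
move=> ha hx; rewrite mulrC nuM; apply: leE_trans hx _.
exact: leE_addr.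
Qed.

Lemma inO_1 : in_O leG nu 1. Proof. by rewrite /in_O nu1 /= leG_refl. Qed.
Lemma inO_N1 : in_O leG nu (-1). Proof. by rewrite /in_O nuN1 /= leG_refl. Qed.
Lemma inO_0 : in_O leG nu 0. Proof. by rewrite /in_O nu0. Qed.
Lemma inO_mul a b : in_O leG nu a -> in_O leG nu b -> in_O leG nu (a * b).
Proof. by move=> ha hb; apply: inO_le. Qed.

Lemma foldr_minE_ge g s : le g (foldr (minE leG) None s) = all (le g) s.
Proof. by elim: s => [|a s IH] /=; [apply: leE_None | rewrite leE_min IH]. Qed.

Lemma foldr_minE_mem s : foldr (minE leG) None s = None \/ foldr (minE leG) None s \in s.
Proof.
elim: s => [|a s IH] /=; first by left.
rewrite /minE; case: ifP => _; first by right; rewrite mem_head.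
by case: IH => [->|h]; [left | right; rewrite in_cons h orbT].
Qed.

Variable d : nat.

Lemma nu_vec_ge g (v : 'rV[K]_d) : le g (nu_vec leG nu v) <-> forall j, le g (nu (v 0 j)).
Proof.
rewrite /nu_vec foldr_minE_ge all_map; split.
  by move/allP => h j; apply: (h j); rewrite mem_enum.
by move=> h; apply/allP => j _; apply: h.
Qed.

Lemma nu_vec_le (v : 'rV[K]_d) j : le (nu_vec leG nu v) (nu (v 0 j)).
Proof. by move/nu_vec_ge: (leE_refl (nu_vec leG nu v)); apply. Qed.

Lemma nu_vec_eq0 (v : 'rV[K]_d) : nu_vec leG nu v = None <-> v = 0.
Proof.
split => [h|->].
  apply/rowP => j; rewrite mxE; apply/nu_eq0/leE_Nonel.
  by rewrite -h nu_vec_le.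
apply: leE_Nonel; apply/nu_vec_ge => j; by rewrite mxE nu0.
Qed.

Lemma nu_vec_attain (v : 'rV[K]_d) :
  v != 0 -> exists k, nu_vec leG nu v = nu (v 0 k) /\ v 0 k != 0.
Proof.
move=> v0.
have hn : nu_vec leG nu v <> None by move/nu_vec_eq0 => e; rewrite e eqxx in v0.
case: (foldr_minE_mem [seq nu (v ord0 i) | i <- enum 'I_d]) => h.
  by exfalso; apply: hn; exact: h.
case/mapP: h => k _ e; exists k; split; first exact: e.
apply/eqP => e2; apply: hn; rewrite /nu_vec e e2 nu0 //.
Qed.

Lemma nu_vec_scale_ge (a : K) (u : 'rV[K]_d) :
  (forall j, le (Some 0) (nu (u 0 j))) -> le (nu a) (nu_vec leG nu (a *: u)).
Proof.
move=> hu; apply/nu_vec_ge => j; rewrite mxE nuM; exact: leE_addr.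
Qed.


Hypothesis Hsc : spherically_complete leG nu.

Lemma ball_sub r1 r2 c1 c2 p x :
  leG r1 r2 -> le (Some r1) (nu (p - c1)) -> le (Some r2) (nu (p - c2)) ->
  le (Some r2) (nu (x - c2)) -> le (Some r1) (nu (x - c1)).
Proof.
move=> hr h1 h2 h3.
have w : forall t, le (Some r2) t -> le (Some r1) t.
  by move=> t; apply: leE_trans; rewrite /= hr.
have -> : x - c1 = (x - c2) + ((c2 - p) + (p - c1)).
  by ring.
apply: nu_ultra; first exact: w.
apply: nu_ultra => //; rewrite nuB; exact: w.
Qed.

Lemma chain1 (I : Type) (X : I -> K -> Prop) :
  (forall i j, (forall x, X i x -> X j x) \/ (forall x, X j x -> X i x)) ->
  (forall i, exists x, X i x) ->
  (forall i x y z a, X i x -> X i y -> X i z -> in_O leG nu a -> X i (x + a * (y - z))) ->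
  exists a, forall i, X i a.
Proof.
move=> ch ne aff.
case: (classic (exists i0, forall i x, X i0 x -> X i x)) => [[i0 h0] | hno].
  by have [x hx] := ne i0; exists x => i; exact: h0.
have strict : forall i, exists j y, (forall x, X j x -> X i x) /\ X i y /\ ~ X j y.
  move=> i; apply: NNPP => hn; apply: hno; exists i => j x hx.
  apply: NNPP => hx'; apply: hn; exists j, x; split=> //.
  case: (ch i j) => h //.
  by exfalso; apply: hx'; apply: h.
pose S := fun B : K -> Prop => exists c r i j,
  (forall y, B y <-> le (Some r) (nu (y - c))) /\ (forall y, X j y -> B y) /\
  (forall y, B y -> X i y).
have [a ha] : exists a, forall B, S B -> B a.
  apply: Hsc.
  by move=> B [c [r [i [j [hB _]]]]]; exists c, r; left; exact: hB.
  move=> B1 B2 [c1 [r1 [i1 [j1 [h1 [hj1 _]]]]]] [c2 [r2 [i2 [j2 [h2 [hj2 _]]]]]].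
    have [p [p1 p2]] : exists p, B1 p /\ B2 p.
      case: (ch j1 j2) => h.
        by have [p hp] := ne j1; exists p; split; [apply: hj1 | apply: hj2; apply: h].
      by have [p hp] := ne j2; exists p; split; [apply: hj1; apply: h | apply: hj2].
    move/h1: p1 => p1; move/h2: p2 => p2.
    case/orP: (leG_total r1 r2) => hr; [right | left] => x.
      by move/h2 => hx; apply/h1; apply: (ball_sub hr p1 p2 hx).
    by move/h1 => hx; apply/h2; apply: (ball_sub hr p2 p1 hx).
exists a => i.
have [j [y [hji [hy hny]]]] := strict i.
have [x hx] := ne j.
have ym : y - x != 0.
  by apply/eqP => e; apply: hny; move/eqP: e; rewrite subr_eq0 => /eqP ->.
have [r hr] := nu_Some ym.
suff hS : S (fun z => le (Some r) (nu (z - x))).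
  have := ha _ hS => hax.
  have := hx; rewrite -[x]addr0 => _.
  have -> : a = x + ((a - x) / (y - x)) * (y - x) by rewrite divfK // addrC subrK.
  apply: aff; [exact: hji | exact: hy | exact: hji | ].
  by apply: inO_div => //; rewrite hr.
exists x, r, i, j; split; first by []; split.
- move=> z hz; apply: NNPP => hn.
  have hn' : le (nu (z - x)) (Some r) by apply: leE_nle; apply/negP.
  have zx : z - x != 0 by apply/eqP => e; apply: hn; rewrite e nu0.
  apply: hny.
  have -> : y = x + ((y - x) / (z - x)) * (z - x) by rewrite divfK // addrC subrK.
  apply: aff => //; apply: inO_div => //; rewrite hr; exact: hn'.
- move=> z hz.
  have -> : z = x + ((z - x) / (y - x)) * (y - x) by rewrite divfK // addrC subrK.
  apply: aff; [exact: hji | exact: hy | exact: hji | ].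
  by apply: inO_div => //; rewrite hr.
Qed.

Lemma chainV (I : Type) (X : I -> 'rV[K]_d -> Prop) :
  (forall i j, (forall x, X i x -> X j x) \/ (forall x, X j x -> X i x)) ->
  (forall i, exists x, X i x) ->
  (forall i x y z a, X i x -> X i y -> X i z -> in_O leG nu a -> X i (x + a *: (y - z))) ->
  exists u, forall i, X i u.
Proof.
move=> ch ne aff.
suff H : forall m, exists p : 'rV[K]_d, forall i, exists x, X i x /\
           forall j : 'I_d, (j < m)%N -> x 0 j = p 0 j.
  have [p hp] := H d; exists p => i; have [x [hx e]] := hp i.
  suff -> : p = x by [].
  by apply/rowP => j; rewrite (e j (ltn_ord j)).
elim => [|m [p hp]].
  by exists 0 => i; have [x hx] := ne i; exists x; split => // j; rewrite ltn0.
case: (ltnP m d) => hmd; last first.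
  exists p => i; have [x [hx e]] := hp i; exists x; split => // j hj; apply: e.
  exact: (leq_trans (ltn_ord j) hmd).
pose jm := Ordinal hmd.
pose Y i (a : K) := exists x, X i x /\ (forall j : 'I_d, (j < m)%N -> x 0 j = p 0 j) /\ x 0 jm = a.
have [a ha] : exists a, forall i, Y i a.
  apply: chain1.
  - move=> i j; case: (ch i j) => h; [left|right] => a' [x [hx [e1 e2]]];
      exists x; split => //; exact: h.
  - by move=> i; have [x [hx e]] := hp i; exists (x 0 jm), x.
  - move=> i a0 b c al [x [hx [ex ax]]] [y [hy [ey ay]]] [z [hz [ez az]]] hal.
    exists (x + al *: (y - z)); split; first exact: aff.
    split; last by rewrite !mxE ax ay az.
    by move=> j hj; rewrite !mxE ex // ey // ez // subrr mulr0 addr0.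
exists (\row_j (if j == jm then a else p 0 j)) => i.
have [x [hx [e1 e2]]] := ha i; exists x; split => // j hj; rewrite mxE.
case: eqP => [->|ne']; first by [].
apply: e1; move: hj; rewrite ltnS leq_eqVlt => /orP [/eqP h|//].
by exfalso; apply: ne'; apply: val_inj.
Qed.


Definition inW (J : {set 'I_d}) (x : 'rV[K]_d) := forall j, j \notin J -> x 0 j = 0.
Definition upc (C : 'rV[K]_d -> Prop) (g : option G) :=
  exists c, C c /\ le (nu_vec leG nu c) g.

Section Sub.
Variable C : 'rV[K]_d -> Prop.
Hypothesis HC : is_O_submodule leG nu C.
Lemma subC0 : C 0. Proof. by case: HC. Qed.
Lemma subCD x y : C x -> C y -> C (x + y). Proof. by case: HC => _ h _; apply: h. Qed.
Lemma subCZ a x : in_O leG nu a -> C x -> C (a *: x). Proof. by case: HC => _ _ h; apply: h. Qed.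
Lemma subCN x : C x -> C (- x).
Proof. by move=> h; rewrite -scaleN1r; apply: subCZ => //; apply: inO_N1. Qed.
Lemma subCB x y : C x -> C y -> C (x - y).
Proof. by move=> hx hy; apply: subCD => //; apply: subCN. Qed.
Lemma upc_up : upwards_closed leG (upc C).
Proof. by move=> g h [c [hc hle]] hgh; exists c; split => //; apply: leE_trans hgh. Qed.
Lemma upc_ne : upc C None.
Proof. by exists 0; split; [apply: subC0 | apply: leE_None]. Qed.
End Sub.

Lemma nu_vec_sub_ge g (x u : 'rV[K]_d) (a : K) :
  (forall j, le (Some 0) (nu (u 0 j))) -> le g (nu_vec leG nu x) -> le g (nu a) ->
  le g (nu_vec leG nu (x - a *: u)).
Proof.
move=> hu hx ha; apply/nu_vec_ge => j; rewrite !mxE.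
apply: nu_ultra; first by move/nu_vec_ge: hx; apply.
rewrite nuN nuM; apply: leE_trans ha _; exact: leE_addr.
Qed.

Lemma line_lemma (J : {set 'I_d}) (C : 'rV[K]_d -> Prop) :
  is_O_submodule leG nu C -> (forall x, C x -> inW J x) -> J != set0 ->
  exists k u, [/\ k \in J, inW J u, u 0 k = 1, (forall j, le (Some 0) (nu (u 0 j)))
   & (forall lam, upc C (nu lam) -> C (lam *: u))].
Proof.
move=> HC hW J0.
case: (classic (forall c, C c -> c = 0)) => hz.
  case/set0Pn: J0 => k hk.
  exists k, (\row_j (if j == k then 1 else 0)); split => //.
  - move=> j hj; rewrite mxE; case: eqP => // e; by rewrite e hk in hj.
  - by rewrite mxE eqxx.
  - by move=> j; rewrite mxE; case: eqP => _; [rewrite nu1 /= leG_refl | rewrite nu0].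
  move=> lam [c [hc hle]]; rewrite (hz c hc) in hle.
  have := hle; rewrite (proj2 (nu_vec_eq0 0) erefl) => /leE_Nonel /nu_eq0 ->.
  by rewrite scale0r; apply: subC0.
have [c0 [hc0 c0nz]] : exists c0, C c0 /\ c0 != 0.
  apply: NNPP => hn; apply: hz => c hc; apply/eqP; apply: NNPP => hc'.
  by apply: hn; exists c; split => //; apply/negP.
pose good (c : 'rV[K]_d) k := c 0 k != 0 /\ forall j, le (nu (c 0 k)) (nu (c 0 j)).
have [k Pk] : exists k, forall c, C c -> exists c', C c' /\ good c' k /\
                                  le (nu (c' 0 k)) (nu_vec leG nu c).
  apply: NNPP => hn.
  have hnk : forall k, exists ck, C ck /\ forall c', C c' -> good c' k ->
                 ~ le (nu (c' 0 k)) (nu_vec leG nu ck).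
    move=> k; apply: NNPP => h; apply: hn; exists k => c hc; apply: NNPP => h2.
    apply: h; exists c; split => // c' hc' hg hle; apply: h2; exists c'; split => //.
  have : forall s : seq 'I_d, exists c1, C c1 /\ c1 != 0 /\
     forall k, k \in s -> forall c', C c' -> good c' k -> ~ le (nu (c' 0 k)) (nu_vec leG nu c1).
    elim => [|k s [c1 [h1 [n1 p1]]]]; first by exists c0; split => //; split.
    have [ck [hck pk]] := hnk k.
    case: (boolP (le (nu_vec leG nu c1) (nu_vec leG nu ck))) => hle.
      exists c1; split => //; split => // k'; rewrite in_cons => /orP [/eqP ->|hk'] c' hc' hg hl.
        by apply: (pk c' hc' hg); apply: leE_trans hl hle.
      exact: (p1 k' hk' c' hc' hg hl).
    have hle' := leE_nle hle.
    exists ck; split => //; split.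
      apply/eqP => e; move: hle; rewrite e (proj2 (nu_vec_eq0 0) erefl) leE_None //.
    move=> k'; rewrite in_cons => /orP [/eqP ->|hk'] c' hc' hg hl; first exact: (pk c' hc' hg hl).
    by apply: (p1 k' hk' c' hc' hg); apply: leE_trans hl hle'.
  move=> /(_ (enum 'I_d)) [c1 [h1 [n1 p1]]].
  have [k [ek nk]] := nu_vec_attain n1.
  apply: (p1 k _ c1 h1); first by rewrite mem_enum.
    by split => // j; rewrite -ek; apply: nu_vec_le.
  by rewrite ek; apply: leE_refl.
pose I := {c : 'rV[K]_d | C c /\ good c k}.
pose X (i : I) (u : 'rV[K]_d) := [/\ u 0 k = 1, C ((sval i) 0 k *: u),
   (forall j, le (Some 0) (nu (u 0 j))) & inW J u].
have [u hu] : exists u, forall i, X i u.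
  apply: chainV.
  - move=> [c [hc [nc gc]]] [c' [hc' [nc' gc']]] /=.
    have sc : forall c1 c2 : 'rV[K]_d, c1 0 k != 0 -> le (nu (c1 0 k)) (nu (c2 0 k)) ->
        forall w, C (c1 0 k *: w) -> C (c2 0 k *: w).
      move=> c1 c2 n1 hl w hw.
      have -> : c2 0 k *: w = (c2 0 k / c1 0 k) *: (c1 0 k *: w) by rewrite scalerA divfK.
      by apply: subCZ => //; apply: inO_div.
    case/orP: (leE_total (nu (c 0 k)) (nu (c' 0 k))) => h; [left|right] => w [w1 w2 w3 w4].
      by split => //; exact: (sc c c' nc h w w2).
    by split => //; exact: (sc c' c nc' h w w2).
  - move=> [c [hc [nc gc]]] /=; exists ((c 0 k)^-1 *: c); split.
    + by rewrite mxE mulVf.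
    + by rewrite scalerA mulfV // scale1r.
    + by move=> j; rewrite mxE mulrC; apply: inO_div.
    + by move=> j hj; rewrite mxE (hW c hc j hj) mulr0.
  - move=> [c [hc [nc gc]]] x y z a [x1 x2 x3 x4] [y1 y2 y3 y4] [z1 z2 z3 z4] ha /=; split.
    + by rewrite !mxE x1 y1 z1 subrr mulr0 addr0.
    + rewrite [X in C X](_ : _ = c 0 k *: x + a *: (c 0 k *: y - c 0 k *: z)); last first.
        by rewrite -scalerBr [LHS]scalerDr !scalerA mulrC.
      by apply: subCD => //; apply: subCZ => //; apply: subCB.
    + move=> j; rewrite !mxE; apply: nu_ultra => //; apply: inO_le => //.
      by apply: nu_ultra => //; rewrite nuN.
    + by move=> j hj; rewrite !mxE x4 // y4 // z4 // subrr mulr0 addr0.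
have [c' [hc' [gc' _]]] := Pk c0 hc0.
have [u1 u2 u3 u4] := hu (exist _ c' (conj hc' gc')).
exists k, u; split => //.
  apply: NNPP => hk; have nc' := proj1 gc'; move/negP: hk => hk.
  by rewrite (hW c' hc' k hk) eqxx in nc'.
move=> lam [c [hc hle]].
have [c2 [hc2 [gc2 hl2]]] := Pk c hc.
have [_ v2 _ _] := hu (exist _ c2 (conj hc2 gc2)).
move: v2 => /= v2.
have n2 := proj1 gc2.
have -> : lam *: u = (lam / c2 0 k) *: (c2 0 k *: u) by rewrite scalerA divfK.
by apply: subCZ => //; apply: inO_div => //; apply: leE_trans hl2 hle.
Qed.

Lemma main_gen n : forall (J : {set 'I_d}), #|J| = n ->
  forall C : 'rV[K]_d -> Prop, is_O_submodule leG nu C -> (forall x, C x -> inW J x) ->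
  exists (F : nat -> {vspace 'rV[K]_d}) (D : nat -> option G -> Prop),
  [/\ (forall i, (i < n)%N -> \dim (F i) = i.+1),
      (forall i j, (i < j)%N -> (j < n)%N -> (F i <= F j)%VS),
      (forall i x, (i < n)%N -> x \in F i -> inW J x),
      (forall i, (i < n)%N -> exists g, D i g) &
      (forall i, (i < n)%N -> upwards_closed leG (D i))] /\
  [/\ (forall i j g, (i <= j)%N -> (j < n)%N -> D j g -> D i g),
      (forall i g, (i < n)%N -> D i g -> upc C g),
      (forall i x, (i < n)%N -> x \in F i -> D i (nu_vec leG nu x) -> C x) &
      (forall x, C x -> exists v : nat -> 'rV[K]_d,
          (forall i, (i < n)%N -> v i \in F i /\ D i (nu_vec leG nu (v i))) /\
          x = \sum_(i < n) v i)].
Proof.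
elim: n => [|n IH] J hJ C HC hW.
  move/eqP: hJ; rewrite cards_eq0 => /eqP J0.
  have Cz : forall x, C x -> x = 0.
    by move=> x hx; apply/rowP => j; rewrite mxE; apply: (hW x hx); rewrite J0 inE.
  exists (fun _ => 0%VS), (fun _ _ => True); split; split => //.
  move=> x hx; exists (fun _ => 0); split => //.
  by rewrite big_ord0; apply: Cz.
have J0 : J != set0 by rewrite -cards_eq0 hJ.
have [k [u [kJ uW uk u0 uC]]] := line_lemma HC hW J0.
have hJ' : #|J :\ k| = n by move: hJ; rewrite (cardsD1 k J) kJ add1n => -[].
pose C' := fun x : 'rV[K]_d => C x /\ x 0 k = 0.
have HC' : is_O_submodule leG nu C'.
  split.
  - by split; [apply: subC0 | rewrite mxE].
  - by move=> x y [hx ex] [hy ey]; split; [apply: subCD | rewrite mxE ex ey addr0].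
  - by move=> a x ha [hx ex]; split; [apply: subCZ | rewrite mxE ex mulr0].
have hW' : forall x, C' x -> inW (J :\ k) x.
  move=> x [hx ex] j; rewrite in_setD1 negb_and negbK => /orP [/eqP ->|hj] //.
  exact: hW.
have [F' [D' [[dim' inc' W' ne' up'] [dec' upc' pc' dc']]]] := IH _ hJ' C' HC' hW'.
have un : u != 0 by apply/eqP => e; move: uk; rewrite e mxE => /eqP; rewrite eq_sym oner_eq0.
have Fk : forall i x, (i < n)%N -> x \in F' i -> x 0 k = 0.
  by move=> i x hi hx; apply: (W' i x hi hx); rewrite in_setD1 eqxx.
have FW : forall i x, (i < n)%N -> x \in F' i -> inW J x.
  move=> i x hi hx j hj; apply: (W' i x hi hx); by rewrite in_setD1 (negbTE hj) andbF.
have hline : forall x, x \in <[u]>%VS -> x = x 0 k *: u.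
  by move=> x /vlineP [l ->]; rewrite mxE uk mulr1.
have upcC' : forall g, upc C' g -> upc C g.
  by move=> g [c [[hc _] hl]]; exists c.
have Cline : forall l, upc C (nu_vec leG nu (l *: u)) -> C (l *: u).
  move=> l hl; apply: uC; apply: (upc_up hl).
  by have := nu_vec_le (l *: u) k; rewrite mxE uk mulr1.
exists (fun i => if i is i'.+1 then (F' i' + <[u]>)%VS else <[u]>%VS).
exists (fun i => if i is i'.+1 then D' i' else upc C).
split; split.
- case => [|i] hi /=; first by rewrite dim_vline un.
  rewrite dimv_disjoint_sum ?dim_vline ?un ?dim' ?addn1 //.
  apply/eqP; rewrite -subv0; apply/subvP => x /memv_capP [h1 h2].
  rewrite memv0; rewrite (hline x h2) (Fk i x hi h1) scale0r //.
- case => [|i] [|j] //= hij hj.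
    exact: addvSr.
  by apply: addvS => //; apply: inc'.
- case => [|i] x /= hi.
    move/hline => -> j hj; by rewrite mxE (uW j hj) mulr0.
  case/memv_addP => w hw [v hv ->] j hj.
  by rewrite mxE (FW i w hi hw j hj) (hline v hv) mxE (uW j hj) mulr0 addr0.
- by case => [|i] hi /=; [exists None; apply: upc_ne | apply: ne'].
- by case => [|i] hi /=; [apply: upc_up | apply: up'].
- case => [|i] [|j] g //= hij hj hD.
    by apply: upcC'; apply: (upc' j).
  exact: (dec' i j).
- case => [|i] g //= hi hD; apply: upcC'; exact: (upc' i).
- case => [|i] x /= hi.
    by move=> /hline e; rewrite e => hD; apply: Cline.
  case/memv_addP => w hw [v hv ex] hD.
  have xk : x 0 k = v 0 k by rewrite ex mxE (Fk i w hi hw) add0r.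
  have ew : w = x - x 0 k *: u by rewrite xk -(hline v hv) ex addrK.
  have hv' : v = x 0 k *: u by rewrite xk; apply: hline.
  rewrite ex; apply: (subCD HC).
    have : C' w; last by case.
    apply: (pc' i w hi hw); apply: (up' i hi _ _ hD).
    rewrite ew; apply: nu_vec_sub_ge => //; [apply: leE_refl | apply: nu_vec_le].
  rewrite hv'; apply: uC.
  have [c [hc hl]] := upc' i _ hi hD.
  exists c; split; first by case: hc.
  by apply: leE_trans hl _; apply: nu_vec_le.
- move=> x hx.
  pose a := x 0 k.
  have hau : C (a *: u).
    apply: uC; exists x; split => //; exact: nu_vec_le.
  have hw : C' (x - a *: u).
    by split; [apply: subCB | rewrite !mxE uk mulr1 subrr].
  have [v' [hv' ev']] := dc' _ hw.
  exists (fun i => if i is i'.+1 then v' i' else a *: u); split.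
    case => [|i] hi /=.
      split; first by apply: memvZ; apply: memv_line.
      exists x; split => //; apply: leE_trans (nu_vec_le x k) _.
      exact: nu_vec_scale_ge.
    have [h1 h2] := hv' i hi; split => //.
    by apply: (subvP (addvSl _ _)).
  rewrite big_ord_recl /=.
  rewrite (eq_bigr (fun i : 'I_n => v' i)); last by move=> i _; rewrite add0n.
  by rewrite -ev' addrC subrK.
Qed.

End Basics.

Theorem theorem3p6
  (K : fieldType) (G : zmodType) (leG : rel G)
  (HG : ordered_abelian_group leG)
  (nu : K -> option G) (Hnu : is_valuation leG nu)
  (Hsc : spherically_complete leG nu)
  (d : nat) (hd : (1 <= d)%N)
  (C : 'rV[K]_d -> Prop) (HC : is_O_submodule leG nu C) :
  exists (F : 'I_d -> {vspace 'rV[K]_d}) (D : 'I_d -> option G -> Prop),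
    (forall i : 'I_d, \dim (F i) = i.+1) /\
    (forall i j : 'I_d, (i < j)%N -> (F i <= F j)%VS && (F i != F j)) /\
    (forall i : 'I_d, (i.+1 = d)%N -> F i = fullv) /\
    (forall i : 'I_d, exists g, D i g) /\
    (forall i : 'I_d, upwards_closed leG (D i)) /\
    (forall (i j : 'I_d) g, (i <= j)%N -> D j g -> D i g) /\
    (forall x : 'rV[K]_d,
       C x <-> exists v : 'I_d -> 'rV[K]_d,
                 (forall i, v i \in F i /\ D i (nu_vec leG nu (v i))) /\
                 x = \sum_(i < d) v i).
Proof.
have hT : #|[set: 'I_d]| = d by rewrite cardsT card_ord.
have hW : forall x, C x -> inW [set: 'I_d] x by move=> x _ j; rewrite inE.
have [F [D [[dimF incF _ neD upD] [decD _ pcD dcD]]]] := main_gen HG Hnu Hsc hT HC hW.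
exists (fun i : 'I_d => F i), (fun i : 'I_d => D i).
split; first by move=> i; apply: dimF.
split.
  move=> i j hij; rewrite incF //=; apply/eqP => e.
  have := dimF i (ltn_ord i); rewrite e dimF // => /eqP; rewrite eqSS => /eqP hji.
  by rewrite hji ltnn in hij.
split.
  move=> i hi; apply/eqP; rewrite eqEdim subvf /= dimvf dimF // hi; by rewrite dim_matrix mul1r.
split; first by move=> i; apply: neD.
split; first by move=> i; apply: upD.
split; first by move=> i j g hij; apply: decD.
move=> x; split.
  move/dcD => [v [hv ->]]; exists (fun i : 'I_d => v i); split => //.
  by move=> i; apply: hv.
move=> [v [hv ->]]; apply: (big_ind C).
- exact: (subC0 HC).
- by move=> a b; apply: (subCD HC).
- by move=> i _; have [h1 h2] := hv i; exact: (pcD i (v i) (ltn_ord i) h1 h2).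
Qed.
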